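(* Let $n$ be an odd multiple of $3$. Then it is possible to place $n-2$ queens on $\mathbb{Z}_n^2$ without conflict.
   Context: Queens are placed on distinct fields of the torus board $\mathbb{Z}_n^2$. Two queens at distinct fields $(x,y),(x',y')$ are in conflict iff $x=x'$, or $y=y'$, or $x+y=x'+y'$, or $x-y=x'-y'$ in $\mathbb{Z}_n$. A placement is without conflict if no two queens are in conflict. *)

(* Defs.v *)
From mathcomp Require Import all_boot all_algebra.
Set Implicit Arguments. Unset Strict Implicit. Unset Printing Implicit Defensive.
Import GRing.Theory.
Local Open Scope ring_scope.

(* Fields of the torus board Z_n^2.  'Z_n is Z/nZ only for n >= 2; the
   theorem below only concerns odd multiples of 3, so n >= 3. *)
Definition field (n : nat) := ('Z_n * 'Z_n)%type.

Definition conflict (n : nat) (p q : field n) : bool :=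
  [|| p.1 == q.1, p.2 == q.2, p.1 + p.2 == q.1 + q.2 | p.1 - p.2 == q.1 - q.2].

Definition without_conflict (n : nat) (S : {set field n}) : Prop :=
  forall p q, p \in S -> q \in S -> p != q -> ~~ conflict p q.

(* Main.v *)
Require Import Defs.
From mathcomp Require Import all_boot all_algebra.
From mathcomp Require Import zify.
Import GRing.Theory.


Definition ee (k x : nat) : nat :=
  if x < 2*k+1 then 0 else if x < 3*k then 1 else if x < 5*k+1 then 2 else 1.

Lemma ee_spec k x :
  (x < 2*k+1 /\ ee k x = 0) \/ (2*k+1 <= x < 3*k /\ ee k x = 1) \/
  (3*k <= x < 5*k+1 /\ ee k x = 2) \/ (5*k+1 <= x /\ ee k x = 1).
Proof.
rewrite /ee; case: ifP => h1; first lia.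
case: ifP => h2; first lia. case: ifP => h3; lia.
Qed.

Lemma mod3 {N a} : 0 < N -> a < 3 * N ->
  a = a %% N \/ a = a %% N + N \/ a = a %% N + 2 * N.
Proof.
move=> N0 ha; have := divn_eq a N.
have : a %/ N < 3 by rewrite ltn_divLR.
case: (a %/ N) => [|[|[|q]]] //; lia.
Qed.

Lemma arith k x y : x < 6*k+3 -> y < 6*k+3 ->
  x != 5*k+1 -> x != 6*k+2 -> y != 5*k+1 -> y != 6*k+2 -> x != y ->
  [/\ (2*x + ee k x) %% (6*k+3) != (2*y + ee k y) %% (6*k+3),
      (3*x + ee k x) %% (6*k+3) != (3*y + ee k y) %% (6*k+3) &
      x + ee k x != y + ee k y].
Proof.
move=> hx hy hx1 hx2 hy1 hy2 hxy.
have N0 : 0 < 6*k+3 by lia.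
have ex := ee_spec k x; have ey := ee_spec k y.
split; apply/negP=> /eqP E.
- have h1 : 2*x + ee k x < 3*(6*k+3) by lia.
  have h2 : 2*y + ee k y < 3*(6*k+3) by lia.
  have := mod3 N0 h1; have := mod3 N0 h2.
  rewrite E; lia.
- have h1 : 3*x + ee k x < 3*(6*k+3) by lia.
  have h2 : 3*y + ee k y < 3*(6*k+3) by lia.
  have := mod3 N0 h1; have := mod3 N0 h2.
  rewrite E; lia.
- lia.
Qed.

Lemma main (t k : nat) (ht : t.+2 = 6*k+3) :
  exists S : {set field t.+2}, #|S| = t /\ without_conflict S.
Proof.

pose N := t.+2.
pose q (x : 'I_N) : field N := (inZp x, inZp (2 * x + ee k x)).
have hA : 5*k+1 < N by lia.
have hB : 6*k+2 < N by lia.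
pose A : 'I_N := Ordinal hA. pose B : 'I_N := Ordinal hB.
exists (q @: ~: [set A; B]); split.
  rewrite card_in_imset.
    have := cardsC [set A; B]; rewrite cards2 card_ord.
    have -> : (A != B) by apply/eqP=> /(congr1 val)/=; lia.
    by move=> H; rewrite /N /= in H; move: H; rewrite add2n => -[].
  move=> x y _ _ /(congr1 (fun p => val p.1)) /=.
  rewrite !modn_small ?ltn_ord // => /val_inj //.
move=> p p' /imsetP[x Hx ->] /imsetP[y Hy ->] Hne.
have Hxy : x != y by apply: contraNneq Hne => ->.
move: Hx Hy; rewrite !in_setC !in_set2 !negb_or => /andP[hx1 hx2] /andP[hy1 hy2].
have := @arith k x y.
rewrite -ht !ltn_ord.
have vA : forall z : 'I_N, z != A -> val z != 5*k+1.
  by move=> z; apply: contra => /eqP h; apply/eqP/val_inj.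
have vB : forall z : 'I_N, z != B -> val z != 6*k+2.
  by move=> z; apply: contra => /eqP h; apply/eqP/val_inj.
move=> /(_ isT isT (vA _ hx1) (vB _ hx2) (vA _ hy1) (vB _ hy2) Hxy) [H2 H3 H4].
apply/and4P; split.
- apply: contra Hxy => /eqP/(congr1 val) /=; rewrite !modn_small ?ltn_ord // => h.
  by apply/eqP/val_inj.
- by apply: contra H2 => /eqP/(congr1 val) /= ->.
- apply: contra H3 => /eqP/(congr1 val) /=.
  have e3 : forall z, z + (2*z + ee k z) = 3*z + ee k z by move=> z; lia.
  by rewrite !modnDm !e3 => h; apply/eqP; exact: h.
- have e2 : forall z : 'I_N, (q z).2 = ((q z).1 + inZp (z + ee k z))%R.
    move=> z; apply/val_inj => /=; rewrite modnDm; congr (_ %% _); lia.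
  have e5 : forall z : 'I_N, ((q z).1 - (q z).2 = - inZp (z + ee k z))%R.
    by move=> z; rewrite e2 opprD addrA subrr add0r.
  rewrite !e5 (inj_eq oppr_inj).
  have bd : forall z : 'I_N, z != A -> z != B -> z + ee k z < N.
    move=> z h1 h2; have := ee_spec k z; have /= := vA _ h1; have /= := vB _ h2.
    have := ltn_ord z; rewrite /N; lia.
  apply: contra H4 => /eqP/(congr1 val) /=.
  by rewrite !modn_small ?bd // => ->.
Qed.

Theorem lemma3 (n : nat) (hodd : odd n) (h3 : (3 %| n)%N) :
  exists S : {set field n}, #|S| = (n - 2)%N /\ without_conflict S.
Proof.
move/dvdnP: h3 => [q hq].
have hq' : odd q by move: hodd; rewrite hq oddM andbT.
have hk : q = (q./2).*2.+1 by rewrite -[LHS](odd_double_half q) hq' add1n.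
set k := q./2 in hk.
have [t ht'] : exists t, n = t.+2 by exists (n - 2); lia.
have ht : t.+2 = 6 * k + 3 by lia.
rewrite ht'; have -> : (t.+2 - 2 = t)%N by lia.
exact: (@main t k ht).
Qed.
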